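(* Let $A$ be a commutative associative 0-dialgebra with involution over a field $\mathbb{F}$. On $A\oplus A$ define $(a,b)\dashv(c,d)=(a\dashv c-d\vdash b^\ast,\; a^\ast\dashv d+c\vdash b)$, $(a,b)\vdash(c,d)=(a\vdash c-d\dashv b^\ast,\; a^\ast\vdash d+c\dashv b)$ and $(a,b)^\ast=(a^\ast,-b)$. Then $A\oplus A$ with these operations is an associative 0-dialgebra with involution.
   Context: A 0-dialgebra is a vector space with bilinear operations $\dashv,\vdash$ satisfying $a\dashv(b\dashv c)=a\dashv(b\vdash c)$ and $(a\dashv b)\vdash c=(a\vdash b)\vdash c$. It is commutative if $a\dashv b=b\vdash a$ for all $a,b$. It is associative if $(a\dashv b)\dashv c=a\dashv(b\dashv c)$, $(a\vdash b)\dashv c=a\vdash(b\dashv c)$ and $(a\vdash b)\vdash c=a\vdash(b\vdash c)$ for all $a,b,c$. An involution is a linear map $\ast$ with $(a^\ast)^\ast=a$, $(a\dashv b)^\ast=b^\ast\vdash a^\ast$, $(a\vdash b)^\ast=b^\ast\dashv a^\ast$. *)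

(* Defs.v *)
From HB Require Import structures.
From mathcomp Require Import all_boot all_order all_algebra.
Set Implicit Arguments. Unset Strict Implicit. Unset Printing Implicit Defensive.
Import GRing.Theory.
Local Open Scope ring_scope.

Section Dialg.
Variables (F : fieldType) (V : lmodType F).

Definition bilinear_op (op : V -> V -> V) : Prop :=
  (forall (k : F) (x y z : V), op (k *: x + y) z = k *: op x z + op y z) /\
  (forall (k : F) (x y z : V), op z (k *: x + y) = k *: op z x + op z y).

Definition linear_map (f : V -> V) : Prop :=
  forall (k : F) (x y : V), f (k *: x + y) = k *: f x + f y.

(* 0-dialgebra: bilinear dashv (dl), vdash (dr) with the two 0-dialgebra identities *)
Definition is_0dialgebra (dl dr : V -> V -> V) : Prop :=
  [/\ bilinear_op dl, bilinear_op dr,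
      (forall a b c, dl a (dl b c) = dl a (dr b c)) &
      (forall a b c, dr (dl a b) c = dr (dr a b) c)].

Definition dialg_commutative (dl dr : V -> V -> V) : Prop :=
  forall a b, dl a b = dr b a.

Definition dialg_associative (dl dr : V -> V -> V) : Prop :=
  [/\ (forall a b c, dl (dl a b) c = dl a (dl b c)),
      (forall a b c, dl (dr a b) c = dr a (dl b c)) &
      (forall a b c, dr (dr a b) c = dr a (dr b c))].

Definition dialg_involution (dl dr : V -> V -> V) (s : V -> V) : Prop :=
  [/\ linear_map s, (forall a, s (s a) = a),
      (forall a b, s (dl a b) = dr (s b) (s a)) &
      (forall a b, s (dr a b) = dl (s b) (s a))].
End Dialg.

Section Double.
Variables (F : fieldType) (V : lmodType F).
Variables (dl dr : V -> V -> V) (s : V -> V).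

Definition dbl_dl (x y : V * V) : V * V :=
  (dl x.1 y.1 - dr y.2 (s x.2), dl (s x.1) y.2 + dr y.1 x.2).
Definition dbl_dr (x y : V * V) : V * V :=
  (dr x.1 y.1 - dl y.2 (s x.2), dr (s x.1) y.2 + dl y.1 x.2).
Definition dbl_inv (x : V * V) : V * V := (s x.1, - x.2).
End Double.

(* Main.v *)
Require Import Defs.
From HB Require Import structures.
From mathcomp Require Import all_boot all_order all_algebra.
Import GRing.Theory.
Local Open Scope ring_scope.

Inductive ex := At of nat | Pl of ex & ex | Ng of ex | Zr.
Fixpoint ev (V : zmodType) (env : seq V) (e : ex) : V :=
  match e with At k => nth 0 env k | Pl a b => ev V env a + ev V env b
  | Ng a => - ev V env a | Zr => 0 end.
Arguments ev {V} env e.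
Fixpoint cf (e : ex) (i : nat) : int :=
  match e with At k => ((k == i) : nat)%:Z | Pl a b => cf a i + cf b i
  | Ng a => - cf a i | Zr => 0 end.

Lemma evE (V : zmodType) (env : seq V) e n : (size env <= n)%N ->
  ev env e = \sum_(i < n) nth 0 env i *~ cf e i.
Proof.
move=> hn; elim: e => [k|a IHa b IHb|a IHa|] /=.
- case: (ltnP k n) => hk.
  + rewrite (bigD1 (Ordinal hk)) //= eqxx mulr1z big1 ?addr0 // => i /negbTE.
    by rewrite -val_eqE /= eq_sym => ->; rewrite mulr0z.
  + rewrite nth_default ?(leq_trans hn hk) // big1 // => i _.
    have : (k != i) by rewrite neq_ltn (leq_trans (ltn_ord i) hk) orbT.
    by move/negbTE=> ->; rewrite mulr0z.
- by rewrite IHa IHb -big_split /=; apply: eq_bigr => i _; rewrite mulrzDr.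
- by rewrite IHa -sumrN; apply: eq_bigr => i _; rewrite mulrNz.
- by rewrite big1 // => i _; rewrite mulr0z.
Qed.

Lemma ev_eq (V : zmodType) (env : seq V) e1 e2 :
  all (fun i => cf e1 i == cf e2 i) (iota 0 (size env)) ->
  ev env e1 = ev env e2.
Proof.
move/allP=> h; rewrite !(fun e => @evE V env e _ (leqnn (size env))); apply: eq_bigr => i _.
by rewrite (eqP (h i _)) // mem_iota /= add0n ltn_ord.
Qed.

Ltac lookup x env := lazymatch env with
  | x :: _ => constr:(0%N)
  | _ :: ?r => let n := lookup x r in constr:(S n) end.
Ltac inlist x env := lazymatch env with
  | x :: _ => constr:(true)
  | _ :: ?r => inlist x r
  | _ => constr:(false) end.
Ltac collect t acc := lazymatch t with
  | (?a + ?b)%R => let acc1 := collect a acc in collect b acc1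
  | (- ?a)%R => collect a acc
  | 0%R => acc
  | _ => let b := inlist t acc in lazymatch b with
         | true => acc | false => constr:(t :: acc) end end.
Ltac reif env t := lazymatch t with
  | (?a + ?b)%R => let ra := reif env a in let rb := reif env b in constr:(Pl ra rb)
  | (- ?a)%R => let ra := reif env a in constr:(Ng ra)
  | 0%R => constr:(Zr)
  | _ => let n := lookup t env in constr:(At n) end.
Ltac zsolve := lazymatch goal with |- @eq ?T ?l ?r =>
  let e0 := collect l (@nil T) in let env := collect r e0 in
  let el := reif env l in let er := reif env r in
  apply: (@ev_eq _ env el er); vm_compute; reflexivity end.


Section Bil.
Variables (F : fieldType) (V : lmodType F) (op : V -> V -> V).
Hypothesis hb : bilinear_op op.
Lemma opDl x y z : op (x + y) z = op x z + op y z.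
Proof. by have := hb.1 1 x y z; rewrite !scale1r. Qed.
Lemma opDr x y z : op z (x + y) = op z x + op z y.
Proof. by have := hb.2 1 x y z; rewrite !scale1r. Qed.
Lemma op0l z : op 0 z = 0.
Proof. by apply: (addrI (op 0 z)); rewrite addr0 -opDl addr0. Qed.
Lemma op0r z : op z 0 = 0.
Proof. by apply: (addrI (op z 0)); rewrite addr0 -opDr addr0. Qed.
Lemma opNl x z : op (- x) z = - op x z.
Proof. by apply/eqP; rewrite -addr_eq0 -opDl addNr op0l. Qed.
Lemma opNr x z : op z (- x) = - op z x.
Proof. by apply/eqP; rewrite -addr_eq0 -opDr addNr op0r. Qed.
Lemma opZl k x z : op (k *: x) z = k *: op x z.
Proof. by have := hb.1 k x 0 z; rewrite !addr0 op0l addr0. Qed.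
Lemma opZr k x z : op z (k *: x) = k *: op z x.
Proof. by have := hb.2 k x 0 z; rewrite !addr0 op0r addr0. Qed.
End Bil.

Section Lin.
Variables (F : fieldType) (V : lmodType F) (s : V -> V).
Hypothesis hl : linear_map s.
Lemma s0 : s 0 = 0.
Proof. by apply: (addrI (s 0)); rewrite addr0 -{1}(scale1r (s 0)) -hl scale1r addr0. Qed.
Lemma sD x y : s (x + y) = s x + s y.
Proof. by rewrite -{1}(scale1r x) hl scale1r. Qed.
Lemma sN x : s (- x) = - s x.
Proof. by apply/eqP; rewrite -addr_eq0 -sD addNr s0. Qed.
Lemma sZ k x : s (k *: x) = k *: s x.
Proof. by rewrite -(addr0 (k *: x)) hl s0 addr0. Qed.
End Lin.

Ltac canon dl sw := repeat match goal with |- context [dl (dl ?a ?b) ?c] =>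
  match goal with |- context [dl (dl a c) b] =>
    first [constr_eq b c; fail 1 | rewrite (sw a c b)] end end.

Theorem theorem4p2 (F : fieldType) (V : lmodType F)
    (dl dr : V -> V -> V) (s : V -> V) :
  is_0dialgebra dl dr -> dialg_commutative dl dr ->
  dialg_associative dl dr -> dialg_involution dl dr s ->
  let W := (V * V)%type in
  [/\ @is_0dialgebra F W (dbl_dl dl dr s) (dbl_dr dl dr s),
      @dialg_associative F W (dbl_dl dl dr s) (dbl_dr dl dr s) &
      @dialg_involution F W (dbl_dl dl dr s) (dbl_dr dl dr s) (dbl_inv s)].
Proof.
move=> [bl br z1 z2] comm [a1 a2 a3] [sl sK sdl sdr]; cbv zeta.
have drE a b : dr a b = dl b a by rewrite comm.
have sdl' a b : s (dl a b) = dl (s a) (s b) by rewrite sdl drE.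
have aL a b c : dl a (dl b c) = dl (dl a b) c by rewrite a1.
have sw a b c : dl (dl a b) c = dl (dl a c) b.
  by rewrite a1 z1 drE -a1.
have lDl := @opDl _ _ _ bl; have lDr := @opDr _ _ _ bl; have lNl := @opNl _ _ _ bl; have lNr := @opNr _ _ _ bl.
have lZl := @opZl _ _ _ bl; have lZr := @opZr _ _ _ bl.
have rDl := @opDl _ _ _ br; have rDr := @opDr _ _ _ br; have rNl := @opNl _ _ _ br; have rNr := @opNr _ _ _ br.
have rZl := @opZl _ _ _ br; have rZr := @opZr _ _ _ br.
have sD' := @sD _ _ _ sl; have sN' := @sN _ _ _ sl; have sZ' := @sZ _ _ _ sl.
have pZ k (a b : V) : k *: ((a, b) : (V * V)%type) = (k *: a, k *: b) by [].
have pD (a b c d : V) : ((a, b) : (V * V)%type) + (c, d) = (a + c, b + d) by [].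
split; [split; [split|split| |]| split | split].
all: rewrite /dbl_dl /dbl_dr /dbl_inv ?/linear_map.
all: intros; repeat match goal with p : prod _ _ |- _ => case: p => ?? end.
all: rewrite /= ?pZ ?pD /=; f_equal.
all: rewrite ?(lDl, lDr, lNl, lNr, lZl, lZr, rDl, rDr, rNl, rNr, rZl, rZr,
            sD', sN', sZ', sK, drE, sdl', aL, opprK, opprD, scalerDr, scalerN).
all: canon dl sw.
all: try zsolve.
all: by case: a.
Qed.
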